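(* Let $d\ge2$ be even, $\mathcal I_d=\{-\tfrac d2,\ldots,\tfrac d2-1\}$, $\mathcal H_d$ with orthonormal basis $\{|j\rangle\}_{j\in\mathcal I_d}$, $|ij\rangle=|i\rangle\otimes|j\rangle$, $\omega^x=e^{2\pi ix/d}$ for real $x$, $\hat Q=\sum_j j|j\rangle\langle j|$, $\widetilde{|k\rangle}=d^{-1/2}\sum_j\omega^{kj}|j\rangle$, $\hat P=\sum_k k\widetilde{|k\rangle}\widetilde{\langle k|}$, $V_{\alpha\beta}=\omega^{\alpha\hat Q+\beta\hat Q^2}$, $\tilde V_{\alpha\beta}=\omega^{\alpha\hat P+\beta\hat P^2}$. Define $G(X)=\mathbb E_{\alpha\beta}V_{\alpha\beta}^{\otimes2}X(V_{\alpha\beta}^\dagger)^{\otimes2}$ and $\tilde G(X)=\mathbb E_{\alpha\beta}\tilde V_{\alpha\beta}^{\otimes2}X(\tilde V_{\alpha\beta}^\dagger)^{\otimes2}$ with $\alpha,\beta$ independent uniform on $[0,d)$, and $\mathcal R=G\circ\tilde G\circ G$. Let $I=\sum_{ab}|ab\rangle\langle ab|$, $F=\sum_{ab}|ab\rangle\langle ba|$, $E=\sum_i|ii\rangle\langle ii|$. Let $i\in\mathcal I_d$ and $u\in\mathcal I_d\setminus\{0\}$, where additions such as $i+u$, $a+u$ are taken modulo $d$ with values in $\mathcal I_d$. Then for $i,j,i',j'\in\mathcal I_d$ with $\{i',j'\}\ne\{i,j\}$, $\mathcal R(|ij\rangle\langle i'j'|)=0$, and $\mathcal R(|i,i+u\rangle\langle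 i,i+u|)=\frac1{d^2}\sum_a|a,a+u\rangle\langle a,a+u|+\frac I{d^2}-\frac{I+F-E}{d^3}$, $\mathcal R(|i,i+u\rangle\langle i+u,i|)=\frac1{d^2}\sum_a|a,a+u\rangle\langle a+u,a|+\frac F{d^2}-\frac{I+F-E}{d^3}$, $\mathcal R(|ii\rangle\langle ii|)=\frac{I+F}{d^2}-\frac{I+F-E}{d^3}$, with sums over $a\in\mathcal I_d$. *)

(* Defs.v *)
From Stdlib Require Import Reals ZArith List.
From Coquelicot Require Import Coquelicot.
Open Scope R_scope.

Definition Idx (d : Z) : list Z :=
  map (fun k : nat => (Z.of_nat k - d / 2)%Z) (seq 0 (Z.to_nat d)).

Definition wrap (d x : Z) : Z := (((x + d / 2) mod d) - d / 2)%Z.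

Definition omega (d : Z) (x : R) : C :=
  (cos (2 * PI * x / IZR d), sin (2 * PI * x / IZR d)).

Definition sumI {A : Type} (add : A -> A -> A) (zero : A) (d : Z) (f : Z -> A) : A :=
  fold_right add zero (map f (Idx d)).
Definition sumC (d : Z) (f : Z -> C) : C := sumI Cplus (RtoC 0) d f.

Definition delta (x y : Z) : C := if Z.eqb x y then RtoC 1 else RtoC 0.

(* Operators on H_d : matrix entries <x| A |y> with x, y in I_d. *)
Definition op1 := Z -> Z -> C.
(* Operators on H_d (x) H_d : entries <a b| X |a' b'>. *)
Definition op2 := Z -> Z -> Z -> Z -> C.

(* |j> has components delta_{x j}; the Fourier vector ~|k> = d^{-1/2} sum_j omega^{kj} |j>. *)
Definition fket (d k x : Z) : C :=
  Cmult (RtoC (/ sqrt (IZR d))) (omega d (IZR (k * x))).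

(* V_{alpha beta} = omega^{alpha Q + beta Q^2} = sum_j omega^{alpha j + beta j^2} |j><j| *)
Definition Vop (d : Z) (al be : R) : op1 := fun x y =>
  sumC d (fun j => Cmult (omega d (al * IZR j + be * IZR j ^ 2))
                         (Cmult (delta x j) (Cconj (delta y j)))).
(* ~V_{alpha beta} = omega^{alpha P + beta P^2} = sum_k omega^{alpha k + beta k^2} ~|k><k~| *)
Definition Vtop (d : Z) (al be : R) : op1 := fun x y =>
  sumC d (fun k => Cmult (omega d (al * IZR k + be * IZR k ^ 2))
                         (Cmult (fket d k x) (Cconj (fket d k y)))).

Definition tens (A B : op1) : op2 := fun a b a' b' => Cmult (A a a') (B b b').
Definition mul2 (d : Z) (X Y : op2) : op2 := fun a b a' b' =>
  sumC d (fun c => sumC d (fun e => Cmult (X a b c e) (Y c e a' b'))).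
Definition adj2 (X : op2) : op2 := fun a b a' b' => Cconj (X a' b' a b).

Definition conj2 (d : Z) (U : op1) (X : op2) : op2 :=
  mul2 d (mul2 d (tens U U) X) (adj2 (tens U U)).

Definition Expect (d : Z) (f : R -> R -> C) : C :=
  Cmult (RtoC (/ (IZR d * IZR d)))
    (RInt (V := C_R_CompleteNormedModule)
       (fun al => RInt (V := C_R_CompleteNormedModule) (fun be => f al be) 0 (IZR d))
       0 (IZR d)).

Definition Gch (d : Z) (X : op2) : op2 := fun a b a' b' =>
  Expect d (fun al be => conj2 d (Vop d al be) X a b a' b').
Definition Gtch (d : Z) (X : op2) : op2 := fun a b a' b' =>
  Expect d (fun al be => conj2 d (Vtop d al be) X a b a' b').
Definition Rch (d : Z) (X : op2) : op2 := Gch d (Gtch d (Gch d X)).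

Definition ketbra (i j i' j' : Z) : op2 := fun a b a' b' =>
  Cmult (Cmult (delta a i) (delta b j)) (Cmult (delta a' i') (delta b' j')).

Definition Iop : op2 := fun a b a' b' => Cmult (delta a a') (delta b b').
Definition Fop : op2 := fun a b a' b' => Cmult (delta a b') (delta b a').
Definition Eop : op2 := fun a b a' b' =>
  Cmult (Cmult (delta a b) (delta a a')) (delta a b').

Definition zero2 : op2 := fun _ _ _ _ => RtoC 0.
Definition add2 (X Y : op2) : op2 := fun a b a' b' => Cplus (X a b a' b') (Y a b a' b').
Definition sub2 (X Y : op2) : op2 := fun a b a' b' => Cminus (X a b a' b') (Y a b a' b').
Definition scal2 (r : R) (X : op2) : op2 := fun a b a' b' => Cmult (RtoC r) (X a b a' b').
Definition sum2 (d : Z) (f : Z -> op2) : op2 := fun a b a' b' => sumC d (fun x => f x a b a' b').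

Definition op_eq (d : Z) (X Y : op2) : Prop :=
  forall a b a' b', In a (Idx d) -> In b (Idx d) -> In a' (Idx d) -> In b' (Idx d) ->
    X a b a' b' = Y a b a' b'.

Definition corr (d : Z) : op2 := scal2 (/ IZR d ^ 3) (sub2 (add2 Iop Fop) Eop).

(* Main.v *)
Require Import Defs.
From Stdlib Require Import Reals ZArith List Lia Lra FunctionalExtensionality.
From Coquelicot Require Import Coquelicot.
Open Scope R_scope.

Lemma cos_sin_2kPI (t : Z) : cos (2 * IZR t * PI) = 1 /\ sin (2 * IZR t * PI) = 0.
Proof.
  destruct (Z_le_gt_dec 0 t) as [H|H].
  - rewrite <- (Z2Nat.id t H), <- INR_IZR_INZ.
    pose proof (cos_period 0 (Z.to_nat t)) as A. pose proof (sin_period 0 (Z.to_nat t)) as B.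
    rewrite Rplus_0_l in A, B. rewrite A, B, cos_0, sin_0. auto.
  - assert (Ht : t = (- Z.of_nat (Z.to_nat (- t)))%Z) by lia.
    rewrite Ht, opp_IZR, <- INR_IZR_INZ.
    pose proof (cos_period 0 (Z.to_nat (-t))) as A. pose proof (sin_period 0 (Z.to_nat (-t))) as B.
    rewrite Rplus_0_l in A, B.
    replace (2 * - INR (Z.to_nat (- t)) * PI) with (- (2 * INR (Z.to_nat (- t)) * PI)) by ring.
    rewrite cos_neg, sin_neg, A, B, cos_0, sin_0. split; ring.
Qed.

Lemma cos_shift (x : R) (t : Z) : cos (x + 2 * IZR t * PI) = cos x.
Proof. destruct (cos_sin_2kPI t) as [A B]. rewrite cos_plus, A, B. ring. Qed.
Lemma sin_shift (x : R) (t : Z) : sin (x + 2 * IZR t * PI) = sin x.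
Proof. destruct (cos_sin_2kPI t) as [A B]. rewrite sin_plus, A, B. ring. Qed.

Section D.
Variable d : Z.
Hypothesis hd : (1 <= d)%Z.

Lemma dpos : 0 < IZR d.
Proof. apply IZR_lt. lia. Qed.
Lemma dnz : IZR d <> 0.
Proof. pose proof dpos. lra. Qed.

Lemma omega_plus x y : omega d (x + y) = (omega d x * omega d y)%C.
Proof.
  unfold omega, Cmult; simpl.
  replace (2 * PI * (x + y) / IZR d) with (2 * PI * x / IZR d + 2 * PI * y / IZR d)
    by (field; apply dnz).
  rewrite cos_plus, sin_plus. f_equal; ring.
Qed.

Lemma omega_conj x : Cconj (omega d x) = omega d (- x).
Proof.
  unfold omega, Cconj; simpl.
  replace (2 * PI * - x / IZR d) with (- (2 * PI * x / IZR d)) by (field; apply dnz).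
  rewrite cos_neg, sin_neg. reflexivity.
Qed.

Lemma omega0 : omega d 0 = RtoC 1.
Proof.
  unfold omega, RtoC. replace (2 * PI * 0 / IZR d) with 0 by (field; apply dnz).
  rewrite cos_0, sin_0. reflexivity.
Qed.

Lemma omega_md (t : Z) : omega d (IZR (t * d)) = RtoC 1.
Proof.
  unfold omega, RtoC. rewrite mult_IZR.
  replace (2 * PI * (IZR t * IZR d) / IZR d) with (2 * IZR t * PI) by (field; apply dnz).
  destruct (cos_sin_2kPI t) as [A B]. rewrite A, B. reflexivity.
Qed.

Lemma omega_shift (a t : Z) : omega d (IZR (a + t * d)) = omega d (IZR a).
Proof.
  rewrite plus_IZR, omega_plus, omega_md. apply injective_projections; simpl; ring.
Qed.

Lemma omega_ne1 (a : Z) : (a mod d <> 0)%Z -> omega d (IZR a) <> RtoC 1.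
Proof.
  intros Ha E.
  assert (Hd : (d > 0)%Z) by lia.
  pose proof (Z.mod_pos_bound a d ltac:(lia)) as Hb.
  rewrite (Z.div_mod a d ltac:(lia)) in E.
  replace (d * (a / d) + a mod d)%Z with (a mod d + (a / d) * d)%Z in E by ring.
  rewrite omega_shift in E.
  set (r := (a mod d)%Z) in *.
  unfold omega, RtoC in E. injection E as E1 E2.
  pose proof dpos as Dp.
  assert (Hr0 : 0 < IZR r) by (apply IZR_lt; lia).
  assert (Hr1 : IZR r < IZR d) by (apply IZR_lt; lia).
  set (th := 2 * PI * IZR r / IZR d) in *.
  assert (Hth0 : 0 < th).
  { unfold th. apply Rdiv_lt_0_compat; [|lra]. pose proof PI_RGT_0. nra. }
  assert (Hth1 : th < 2 * PI).
  { unfold th. apply (Rmult_lt_reg_r (IZR d)); [lra|].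
    unfold Rdiv. rewrite Rmult_assoc, Rinv_l by lra. pose proof PI_RGT_0. nra. }
  destruct (sin_eq_O_2PI_0 th ltac:(lra) ltac:(lra) E2) as [H|[H|H]]; try lra.
  rewrite H, cos_PI in E1. lra.
Qed.

End D.


Definition sl (l : list Z) (f : Z -> C) : C := fold_right Cplus (RtoC 0) (map f l).
Lemma sumC_sl d f : sumC d f = sl (Idx d) f.
Proof. reflexivity. Qed.

Lemma sl_ext l f g : (forall x, In x l -> f x = g x) -> sl l f = sl l g.
Proof.
  induction l; simpl; intros H; auto. unfold sl in *; simpl.
  rewrite H by auto. f_equal. apply IHl. auto.
Qed.
Lemma sl_plus l f g : sl l (fun x => f x + g x)%C = (sl l f + sl l g)%C.
Proof. induction l; unfold sl in *; simpl. apply injective_projections; simpl; ring.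
  rewrite IHl. ring. Qed.
Lemma sl_minus l f g : sl l (fun x => f x - g x)%C = (sl l f - sl l g)%C.
Proof. induction l; unfold sl in *; simpl. apply injective_projections; simpl; ring.
  rewrite IHl. ring. Qed.
Lemma sl_scal_l l c f : sl l (fun x => c * f x)%C = (c * sl l f)%C.
Proof. induction l; unfold sl in *; simpl. apply injective_projections; simpl; ring.
  rewrite IHl. ring. Qed.
Lemma sl_scal_r l c f : sl l (fun x => f x * c)%C = (sl l f * c)%C.
Proof. induction l; unfold sl in *; simpl. apply injective_projections; simpl; ring.
  rewrite IHl. ring. Qed.
Lemma sl_zero l : sl l (fun _ => RtoC 0) = RtoC 0.
Proof. induction l; unfold sl in *; simpl; auto. rewrite IHl. apply injective_projections; simpl; ring. Qed.
Lemma sl_zero' l f : (forall x, In x l -> f x = RtoC 0) -> sl l f = RtoC 0.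
Proof. intros H. rewrite (sl_ext l f (fun _ => RtoC 0)) by auto. apply sl_zero. Qed.
Lemma sl_conj l f : Cconj (sl l f) = sl l (fun x => Cconj (f x)).
Proof. induction l; unfold sl in *; simpl. apply injective_projections; simpl; ring.
  rewrite Cplus_conj, IHl. reflexivity. Qed.
Lemma sl_mul l1 l2 f g : (sl l1 f * sl l2 g)%C = sl l1 (fun x => sl l2 (fun y => f x * g y))%C.
Proof. rewrite <- sl_scal_r. apply sl_ext; intros. rewrite <- sl_scal_l. reflexivity. Qed.
Lemma sl_swap l1 l2 f : sl l1 (fun x => sl l2 (fun y => f x y)) = sl l2 (fun y => sl l1 (fun x => f x y)).
Proof.
  induction l1; simpl. unfold sl at 1; simpl. symmetry. apply sl_zero.
  unfold sl at 1; simpl. fold (sl l1 (fun x => sl l2 (fun y => f x y))). rewrite IHl1.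
  rewrite <- sl_plus. reflexivity.
Qed.

Definition deltaR (x y : Z) : R := if Z.eqb x y then 1 else 0.
Lemma delta_R x y : delta x y = RtoC (deltaR x y).
Proof. unfold delta, deltaR. destruct (Z.eqb x y); reflexivity. Qed.
Lemma delta_sym x y : delta x y = delta y x.
Proof. unfold delta. rewrite Z.eqb_sym. reflexivity. Qed.
Lemma delta_conj x y : Cconj (delta x y) = delta x y.
Proof. unfold delta. destruct (Z.eqb x y); apply injective_projections; simpl; ring. Qed.

Lemma sl_pick l a f : NoDup l -> In a l -> sl l (fun x => delta x a * f x)%C = f a.
Proof.
  induction l as [|b l IH]; intros ND Ha; simpl in Ha; [contradiction|].
  inversion ND; subst. unfold sl; simpl. fold (sl l (fun x => delta x a * f x)%C).
  destruct Ha as [<-|Ha].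
  - rewrite sl_zero'.
    + unfold delta. rewrite Z.eqb_refl. apply injective_projections; simpl; ring.
    + intros x Hx. unfold delta. destruct (Z.eqb_spec x b); [subst; contradiction|].
      apply injective_projections; simpl; ring.
  - rewrite IH by auto. unfold delta. destruct (Z.eqb_spec b a); [subst; contradiction|].
    apply injective_projections; simpl; ring.
Qed.

Lemma Idx_NoDup d : NoDup (Idx d).
Proof.
  unfold Idx. apply NoDup_map_NoDup_ForallPairs. intros x y _ _ H. lia. apply seq_NoDup.
Qed.
Lemma Idx_In d x : (1 <= d)%Z -> In x (Idx d) <-> (- (d/2) <= x < d - d/2)%Z.
Proof.
  intros hd. unfold Idx. rewrite in_map_iff. split.
  - intros [k [<- Hk]]. apply in_seq in Hk. lia.
  - intros H. exists (Z.to_nat (x + d/2)). split. lia. apply in_seq. lia.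
Qed.
Lemma Idx_length d : length (Idx d) = Z.to_nat d.
Proof. unfold Idx. rewrite length_map, length_seq. reflexivity. Qed.

Definition sn (l : list nat) (F : nat -> C) : C := fold_right Cplus (RtoC 0) (map F l).
Lemma sn_app l1 l2 F : sn (l1 ++ l2) F = (sn l1 F + sn l2 F)%C.
Proof. induction l1; unfold sn in *; simpl. apply injective_projections; simpl; ring.
  rewrite IHl1. ring. Qed.
Lemma sn_shift n F : F n = F O -> sn (seq 0 n) (fun i => F (S i)) = sn (seq 0 n) F.
Proof.
  intros H. unfold sn. rewrite <- (map_map S F), seq_shift.
  fold (sn (seq 1 n) F). fold (sn (seq 0 n) F).
  assert (E : (F O + sn (seq 1 n) F)%C = (sn (seq 0 n) F + F n)%C).
  { change (sn (seq 0 (S n)) F = (sn (seq 0 n) F + F n)%C).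
    rewrite seq_S, sn_app. unfold sn at 2; simpl. apply injective_projections; simpl; ring. }
  rewrite H in E. apply (f_equal (fun z => z - F O)%C) in E.
  replace (F O + sn (seq 1 n) F - F O)%C with (sn (seq 1 n) F) in E by ring.
  rewrite E. ring.
Qed.

Lemma sl_const l c : sl l (fun _ => c) = (RtoC (INR (length l)) * c)%C.
Proof. induction l; unfold sl in *; simpl. apply injective_projections; simpl; ring.
  rewrite IHl. destruct (length l). simpl. apply injective_projections; simpl; ring.
  apply injective_projections; simpl; ring. Qed.

Definition ind (d A : Z) : R := if Z.eqb (A mod d) 0 then 1 else 0.

Lemma fourier d (hd : (1 <= d)%Z) (A : Z) :
  sl (Idx d) (fun k => omega d (IZR (k * A))) = RtoC (IZR d * ind d A).
Proof.
  unfold ind. destruct (Z.eqb_spec (A mod d) 0) as [H|H].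
  - rewrite (sl_ext _ _ (fun _ => RtoC 1)).
    + rewrite sl_const, Idx_length, INR_IZR_INZ, Z2Nat.id by lia.
      apply injective_projections; simpl; ring.
    + intros k _. rewrite (Z.div_mod A d) by lia. rewrite H.
      replace (k * (d * (A / d) + 0))%Z with ((k * (A/d)) * d)%Z by ring.
      apply omega_md; lia.
  - set (T := sl (Idx d) (fun k => omega d (IZR (k * A)))).
    assert (E : (omega d (IZR A) * T)%C = T).
    { unfold T. rewrite <- sl_scal_l.
      unfold sl, Idx. rewrite !map_map.
      transitivity (sn (seq 0 (Z.to_nat d)) (fun i => (fun x => omega d (IZR ((Z.of_nat x - d / 2) * A))) (S i))).
      - unfold sn. f_equal. apply map_ext. intros i.
        rewrite <- omega_plus by lia. rewrite <- plus_IZR. f_equal. f_equal. lia.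
      - apply (sn_shift _ (fun x => omega d (IZR ((Z.of_nat x - d / 2) * A)))).
        replace ((Z.of_nat (Z.to_nat d) - d / 2) * A)%Z with ((Z.of_nat 0 - d/2) * A + A * d)%Z by lia.
        apply omega_shift; lia. }
    assert (Hw := omega_ne1 d hd A H).
    rewrite Rmult_0_r.
    assert (E2 : ((omega d (IZR A) - RtoC 1) * T)%C = RtoC 0).
    { replace ((omega d (IZR A) - RtoC 1) * T)%C with (omega d (IZR A) * T - T)%C by ring.
      rewrite E. apply injective_projections; simpl; ring. }
    assert (Hn : (omega d (IZR A) - RtoC 1)%C <> RtoC 0).
    { intros E3. apply Hw. replace (omega d (IZR A)) with (omega d (IZR A) - RtoC 1 + RtoC 1)%C by ring.
      rewrite E3. apply injective_projections; simpl; ring. }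
    replace T with (/ (omega d (IZR A) - RtoC 1) * ((omega d (IZR A) - RtoC 1) * T))%C
      by (field; exact Hn).
    rewrite E2. apply injective_projections; simpl; ring.
Qed.

Section D2.
Variable d : Z.
Hypothesis hd : (1 <= d)%Z.
Let dnz := dnz d hd.
Let omega0 := omega0 d hd.
Lemma isRInt_l {V : NormedModule R_AbsRing} (f : R -> V) a b l l' : is_RInt f a b l -> l = l' -> is_RInt f a b l'.
Proof. intros H <-. exact H. Qed.

Lemma RInt_omega (c : C) (A : R) (M : Z) :
  is_RInt (V := C_R_NormedModule) (fun t => (c * omega d (A + IZR M * t))%C) 0 (IZR d)
    (c * RtoC (if Z.eqb M 0 then IZR d else 0) * omega d A)%C.
Proof.
  destruct (Z.eqb_spec M 0) as [HM|HM].
  - subst M. 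
    replace (fun t => (c * omega d (A + IZR 0 * t))%C) with (fun _ : R => (c * omega d A)%C).
    2:{ apply functional_extensionality; intros t. f_equal. f_equal. ring. }
    pose proof (is_RInt_const (V := C_R_NormedModule) 0 (IZR d) (c * omega d A)%C) as H.
    match goal with |- is_RInt _ _ _ ?l => replace l with (scal (IZR d - 0) (c * omega d A)%C) end.
    exact H.
    unfold scal; simpl. unfold prod_scal, scal; simpl. unfold mult; simpl.
    apply injective_projections; simpl; ring.
  - assert (HMr : IZR M <> 0) by (apply not_0_IZR; auto).
    pose proof dnz as Dn. pose proof PI_RGT_0 as Hpi.
    set (K := IZR d / (2 * PI * IZR M)).
    set (th := fun t => 2 * PI * (A + IZR M * t) / IZR d).
    assert (Hth : th (IZR d) = th 0 + 2 * IZR M * PI) by (unfold th; field; auto).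
    replace (c * RtoC (if (M =? 0)%Z then IZR d else 0) * omega d A)%C with ((0:R), (0:R)).
    2:{ rewrite (proj2 (Z.eqb_neq M 0) HM). apply injective_projections; simpl; ring. }
    apply is_RInt_fct_extend_pair; simpl.
    + set (F := fun t => fst c * K * sin (th t) + snd c * K * cos (th t)).
      eapply isRInt_l.
      2:{ instantiate (1 := minus (F (IZR d)) (F 0)). unfold F. rewrite Hth, sin_shift, cos_shift. unfold minus, plus, opp; simpl. ring. }
      refine (is_RInt_derive (V := R_CompleteNormedModule) F _ 0 (IZR d) _ _).
      * intros x _. unfold F, th. auto_derive; auto.
        unfold Rdiv. set (s0 := sin _). set (c0 := cos _). unfold K. field. repeat split; auto; lra.
      * intros x _. unfold th. apply (ex_derive_continuous (V := R_CompleteNormedModule)). auto_derive. auto.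
    + set (F := fun t => - fst c * K * cos (th t) + snd c * K * sin (th t)).
      eapply isRInt_l.
      2:{ instantiate (1 := minus (F (IZR d)) (F 0)). unfold F. rewrite Hth, sin_shift, cos_shift. unfold minus, plus, opp; simpl. ring. }
      refine (is_RInt_derive (V := R_CompleteNormedModule) F _ 0 (IZR d) _ _).
      * intros x _. unfold F, th. auto_derive; auto.
        unfold omega; simpl.
        unfold Rdiv. set (s0 := sin _). set (c0 := cos _). unfold K. field. repeat split; auto; lra.
      * intros x _. unfold th. apply (ex_derive_continuous (V := R_CompleteNormedModule)). auto_derive. auto.
Qed.


Definition Good (f : R -> R -> C) (v : C) := exists (h : R -> C),
  (forall al, is_RInt (V:=C_R_NormedModule) (f al) 0 (IZR d) (h al)) /\
  is_RInt (V:=C_R_NormedModule) h 0 (IZR d) v.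

Lemma plusC (x y : C) : plus (G := C_R_NormedModule) x y = Cplus x y.
Proof. reflexivity. Qed.

Lemma Good_ext f g v : (forall al be, f al be = g al be) -> Good g v -> Good f v.
Proof.
  intros H. replace f with g; auto.
  apply functional_extensionality; intros al; apply functional_extensionality; intros be; auto.
Qed.
Lemma Good_val f v w : Good f v -> v = w -> Good f w.
Proof. intros H <-; auto. Qed.

Lemma Good_plus f g v w : Good f v -> Good g w -> Good (fun al be => f al be + g al be)%C (v + w)%C.
Proof.
  intros [h [H1 H2]] [h' [H1' H2']]. exists (fun al => h al + h' al)%C. split.
  - intros al. exact (is_RInt_plus _ _ _ _ _ _ (H1 al) (H1' al)).
  - exact (is_RInt_plus _ _ _ _ _ _ H2 H2').
Qed.

Lemma Good_zero : Good (fun _ _ => RtoC 0) (RtoC 0).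
Proof.
  exists (fun _ => RtoC 0). split.
  - intros al. eapply isRInt_l. apply (is_RInt_const (V := C_R_NormedModule)).
    unfold scal; simpl. unfold prod_scal, scal; simpl. unfold mult; simpl.
    apply injective_projections; simpl; ring.
  - eapply isRInt_l. apply (is_RInt_const (V := C_R_NormedModule)).
    unfold scal; simpl. unfold prod_scal, scal; simpl. unfold mult; simpl.
    apply injective_projections; simpl; ring.
Qed.

Lemma Good_base (c : C) (N M : Z) :
  Good (fun al be => c * omega d (IZR N * al + IZR M * be))%C
       (c * RtoC (IZR d * IZR d * deltaR N 0 * deltaR M 0))%C.
Proof.
  exists (fun al => c * RtoC (if Z.eqb M 0 then IZR d else 0) * omega d (IZR N * al))%C. split.
  - intros al. apply RInt_omega.
  - eapply isRInt_l.
    + apply (is_RInt_ext (V := C_R_NormedModule)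
         (fun al => (c * RtoC (if Z.eqb M 0 then IZR d else 0)) * omega d (0 + IZR N * al))%C).
      intros x _. f_equal. f_equal. ring.
      apply RInt_omega.
    + rewrite omega0. unfold deltaR. destruct (Z.eqb M 0), (Z.eqb N 0);
      apply injective_projections; simpl; ring.
Qed.

Lemma Good_sl {A : Type} (l : list A) (F : A -> R -> R -> C) (v : A -> C) :
  (forall x, In x l -> Good (F x) (v x)) ->
  Good (fun al be => fold_right Cplus (RtoC 0) (map (fun x => F x al be) l))
       (fold_right Cplus (RtoC 0) (map v l)).
Proof.
  induction l; intros H; simpl.
  - apply Good_zero.
  - apply Good_plus. apply H; simpl; auto. apply IHl; intros; apply H; simpl; auto.
Qed.

Lemma Expect_Good f v : Good f v -> Expect d f = (RtoC (/ (IZR d * IZR d)) * v)%C.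
Proof.
  intros [h [H1 H2]]. unfold Expect. f_equal.
  replace (fun al => RInt (V := C_R_CompleteNormedModule) (fun be => f al be) 0 (IZR d)) with h.
  apply (is_RInt_unique (V := C_R_CompleteNormedModule)). exact H2.
  apply functional_extensionality; intros al. symmetry.
  apply (is_RInt_unique (V := C_R_CompleteNormedModule)). exact (H1 al).
Qed.
End D2.

Lemma conj_RtoC r : Cconj (RtoC r) = RtoC r.
Proof. apply injective_projections; simpl; ring. Qed.

Section D3.
Variable d : Z.
Hypothesis hd : (1 <= d)%Z.
Let I := Idx d.
Let ND := Idx_NoDup d.

Lemma pick l a f g : NoDup l -> In a l -> (forall x, In x l -> g x = delta x a * f x)%C -> sl l g = f a.
Proof. intros H1 H2 Hg. rewrite (sl_ext _ _ _ Hg). apply sl_pick; auto. Qed.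

Lemma Vop_eq al be x y : In x (Idx d) ->
  Vop d al be x y = (omega d (al * IZR x + be * IZR x ^ 2) * delta y x)%C.
Proof.
  intros Hx. unfold Vop. rewrite sumC_sl.
  apply (pick _ x (fun j => omega d (al * IZR j + be * IZR j ^ 2) * delta y j)%C); auto.
  intros j _. rewrite delta_conj, (delta_sym x j). ring.
Qed.

Lemma conj2_diag (U : op1) (u : Z -> C) X a b a' b' :
  (forall x y, In x (Idx d) -> U x y = (u x * delta y x)%C) ->
  In a (Idx d) -> In b (Idx d) -> In a' (Idx d) -> In b' (Idx d) ->
  conj2 d U X a b a' b' = (u a * u b * X a b a' b' * Cconj (u a' * u b'))%C.
Proof.
  intros HU Ha Hb Ha' Hb'. unfold conj2, mul2, tens, adj2. rewrite !sumC_sl.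
  assert (Hin : forall c e, sumC d (fun c0 => sumC d (fun e0 => U a c0 * U b e0 * X c0 e0 c e))%C
                  = (u a * u b * X a b c e)%C).
  { intros c e. rewrite sumC_sl. apply (pick _ a (fun c0 => u a * u b * X c0 b c e)%C); auto.
    intros c0 _. rewrite sumC_sl.
    transitivity (delta c0 a * sl (Idx d) (fun e0 => delta e0 b * (u a * u b * X c0 e0 c e)))%C.
    - rewrite <- sl_scal_l. apply sl_ext. intros e0 _. rewrite !HU by auto. ring.
    - f_equal. apply sl_pick; auto. }
  apply (pick _ a' (fun c => u a * u b * X a b c b' * Cconj (u a' * u b'))%C); auto.
  intros c _. rewrite sumC_sl.
  transitivity (delta c a' * sl (Idx d) (fun e => delta e b' * (u a * u b * X a b c e * Cconj (u a' * u b'))))%C.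
  - rewrite <- sl_scal_l. apply sl_ext. intros e _. rewrite Hin, !HU by auto.
    rewrite !Cmult_conj, !delta_conj. ring.
  - f_equal. apply sl_pick; auto.
Qed.

Lemma Gch_E X a b a' b' :
  In a (Idx d) -> In b (Idx d) -> In a' (Idx d) -> In b' (Idx d) ->
  Gch d X a b a' b' = (X a b a' b' *
     RtoC (deltaR (a + b - a' - b') 0 * deltaR (a*a + b*b - a'*a' - b'*b') 0))%C.
Proof.
  intros Ha Hb Ha' Hb'. unfold Gch.
  assert (G : Good d (fun al be => conj2 d (Vop d al be) X a b a' b')
     (X a b a' b' * RtoC (IZR d * IZR d * deltaR (a + b - a' - b') 0 * deltaR (a*a + b*b - a'*a' - b'*b') 0))%C).
  { eapply Good_ext; [|apply Good_base; auto].
    intros al be. rewrite (conj2_diag _ (fun x => omega d (al * IZR x + be * IZR x ^ 2))) by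
      (auto; intros; apply Vop_eq; auto).
    rewrite Cmult_conj, !omega_conj by auto.
    match goal with |- _ = (_ * omega d ?t)%C =>
      replace (omega d t) with (omega d (al * IZR a + be * IZR a ^ 2) * omega d (al * IZR b + be * IZR b ^ 2) *
        (omega d (- (al * IZR a' + be * IZR a' ^ 2)) * omega d (- (al * IZR b' + be * IZR b' ^ 2))))%C end.
    ring.
    rewrite <- !omega_plus by auto. f_equal.
    rewrite !minus_IZR, !plus_IZR, !mult_IZR. ring. }
  rewrite (Expect_Good d _ _ G).
  pose proof (dnz d hd).
  apply injective_projections; simpl; field; auto.
Qed.

Lemma conj2_ketbra (U : op1) p q p' q' x y x' y' :
  In p (Idx d) -> In q (Idx d) -> In p' (Idx d) -> In q' (Idx d) ->
  conj2 d U (ketbra p q p' q') x y x' y' = (U x p * U y q * Cconj (U x' p' * U y' q'))%C.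
Proof.
  intros Hp Hq Hp' Hq'. unfold conj2, mul2, tens, adj2, ketbra. rewrite !sumC_sl.
  assert (Hin : forall c e, sumC d (fun c0 => sumC d (fun e0 => U x c0 * U y e0 *
        (delta c0 p * delta e0 q * (delta c p' * delta e q'))))%C
                  = (U x p * U y q * (delta c p' * delta e q'))%C).
  { intros c e. rewrite sumC_sl.
    apply (pick _ p (fun c0 => U x c0 * U y q * (delta c p' * delta e q'))%C); auto.
    intros c0 _. rewrite sumC_sl.
    transitivity (delta c0 p * sl (Idx d) (fun e0 => delta e0 q * (U x c0 * U y e0 * (delta c p' * delta e q'))))%C.
    - rewrite <- sl_scal_l. apply sl_ext. intros e0 _. ring.
    - f_equal. apply sl_pick; auto. }
  apply (pick _ p' (fun c => U x p * U y q * Cconj (U x' c * U y' q'))%C); auto.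
  intros c _. rewrite sumC_sl.
  transitivity (delta c p' * sl (Idx d) (fun e => delta e q' * (U x p * U y q * Cconj (U x' c * U y' e))))%C.
  - rewrite <- sl_scal_l. apply sl_ext. intros e _. rewrite Hin. ring.
  - f_equal. apply sl_pick; auto.
Qed.

Lemma Vtop_eq al be x y :
  Vtop d al be x y = sl (Idx d) (fun k => RtoC (/ IZR d) *
        omega d (IZR k * al + IZR (k*k) * be + IZR (k * (x - y))))%C.
Proof.
  unfold Vtop. rewrite sumC_sl. apply sl_ext. intros k _. unfold fket.
  rewrite Cmult_conj, conj_RtoC, omega_conj by auto.
  replace (RtoC (/ IZR d)) with (RtoC (/ sqrt (IZR d)) * RtoC (/ sqrt (IZR d)))%C.
  2:{ rewrite <- RtoC_mult. f_equal. rewrite <- Rinv_mult, sqrt_sqrt; auto. pose proof (dpos d hd); lra. }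
  replace (omega d (IZR k * al + IZR (k * k) * be + IZR (k * (x - y)))) with
     (omega d (al * IZR k + be * IZR k ^ 2) * (omega d (IZR (k * x)) * omega d (- IZR (k * y))))%C.
  ring.
  rewrite <- !omega_plus by auto. f_equal. rewrite !mult_IZR, minus_IZR. ring.
Qed.


Definition sl4 (F : Z -> Z -> Z -> Z -> C) : C :=
  sl (Idx d) (fun k => sl (Idx d) (fun l => sl (Idx d) (fun k' => sl (Idx d) (fun l' => F k l k' l')))).

Lemma sl4_ext F G : (forall k l k' l', In k (Idx d) -> In l (Idx d) -> In k' (Idx d) -> In l' (Idx d) ->
  F k l k' l' = G k l k' l') -> sl4 F = sl4 G.
Proof. intros H. unfold sl4. repeat (apply sl_ext; intros). auto. Qed.
Lemma sl4_plus F G : sl4 (fun k l k' l' => F k l k' l' + G k l k' l')%C = (sl4 F + sl4 G)%C.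
Proof. unfold sl4. rewrite <- sl_plus. repeat (apply sl_ext; intros; rewrite <- ?sl_plus). reflexivity. Qed.
Lemma sl4_minus F G : sl4 (fun k l k' l' => F k l k' l' - G k l k' l')%C = (sl4 F - sl4 G)%C.
Proof. unfold sl4. rewrite <- sl_minus. repeat (apply sl_ext; intros; rewrite <- ?sl_minus). reflexivity. Qed.
Lemma sl4_scal c F : sl4 (fun k l k' l' => c * F k l k' l')%C = (c * sl4 F)%C.
Proof. unfold sl4. rewrite <- sl_scal_l. repeat (apply sl_ext; intros; rewrite <- ?sl_scal_l). reflexivity. Qed.

Lemma Good_sl4 (F : Z -> Z -> Z -> Z -> R -> R -> C) v :
  (forall k l k' l', Good d (F k l k' l') (v k l k' l')) ->
  Good d (fun al be => sl4 (fun k l k' l' => F k l k' l' al be)) (sl4 v).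
Proof.
  intros H. unfold sl4, sl.
  apply (Good_sl d _ (fun k al be => sl (Idx d) (fun l => sl (Idx d) (fun k' => sl (Idx d) (fun l' => F k l k' l' al be))))).
  intros k _. apply (Good_sl d _ (fun l al be => sl (Idx d) (fun k' => sl (Idx d) (fun l' => F k l k' l' al be)))).
  intros l _. apply (Good_sl d _ (fun k' al be => sl (Idx d) (fun l' => F k l k' l' al be))).
  intros k' _. apply (Good_sl d _ (fun l' al be => F k l k' l' al be)).
  intros l' _. auto.
Qed.

Lemma key_sq k l k' l' : (k + l - k' - l' = 0)%Z -> (k*k + l*l - k'*k' - l'*l' = 0)%Z ->
  (k = k' /\ l = l') \/ (k = l' /\ l = k').
Proof.
  intros H1 H2. assert (H3 : ((k' - k) * (k' - l) = 0)%Z) by nia.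
  apply Z.mul_eq_0 in H3. lia.
Qed.

Lemma mask_eq k l k' l' : deltaR (k + l - k' - l') 0 * deltaR (k*k + l*l - k'*k' - l'*l') 0 =
  deltaR k k' * deltaR l l' + deltaR k l' * deltaR l k' - deltaR k l * deltaR k k' * deltaR l l'.
Proof.
  unfold deltaR.
  destruct (Z.eqb_spec (k + l - k' - l') 0), (Z.eqb_spec (k*k + l*l - k'*k' - l'*l') 0);
  destruct (Z.eqb_spec k k'), (Z.eqb_spec l l'), (Z.eqb_spec k l'), (Z.eqb_spec l k'), (Z.eqb_spec k l);
  try ring; subst; try lia; try nia;
  try (destruct (key_sq _ _ _ _ e e0); lia).
Qed.

Lemma pick4a g : sl4 (fun k l k' l' => RtoC (deltaR k k' * deltaR l l') * g k l k' l')%C =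
  sl (Idx d) (fun k => sl (Idx d) (fun l => g k l k l)).
Proof.
  unfold sl4. apply sl_ext; intros k Hk. apply sl_ext; intros l Hl.
  apply (pick _ k (fun k' => g k l k' l)); auto. intros k' _.
  transitivity (delta k' k * sl (Idx d) (fun l' => delta l' l * g k l k' l'))%C.
  - rewrite <- sl_scal_l. apply sl_ext. intros l' _.
    rewrite RtoC_mult, <- !delta_R, (delta_sym k), (delta_sym l). ring.
  - f_equal. apply sl_pick; auto.
Qed.
Lemma pick4b g : sl4 (fun k l k' l' => RtoC (deltaR k l' * deltaR l k') * g k l k' l')%C =
  sl (Idx d) (fun k => sl (Idx d) (fun l => g k l l k)).
Proof.
  unfold sl4. apply sl_ext; intros k Hk. apply sl_ext; intros l Hl.
  apply (pick _ l (fun k' => g k l k' k)); auto. intros k' _.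
  transitivity (delta k' l * sl (Idx d) (fun l' => delta l' k * g k l k' l'))%C.
  - rewrite <- sl_scal_l. apply sl_ext. intros l' _.
    rewrite RtoC_mult, <- !delta_R, (delta_sym k), (delta_sym l). ring.
  - f_equal. apply sl_pick; auto.
Qed.
Lemma pick4c g : sl4 (fun k l k' l' => RtoC (deltaR k l * deltaR k k' * deltaR l l') * g k l k' l')%C =
  sl (Idx d) (fun k => g k k k k).
Proof.
  rewrite (sl4_ext _ (fun k l k' l' => RtoC (deltaR k k' * deltaR l l') * (RtoC (deltaR k l) * g k l k' l'))%C).
  2:{ intros. rewrite !RtoC_mult. ring. }
  rewrite pick4a. apply sl_ext; intros k Hk.
  apply (pick _ k (fun l => g k l k l)); auto. intros l _. rewrite <- delta_R, (delta_sym k). reflexivity.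
Qed.

Lemma fourier1 c A (h : Z -> Z) : (forall k, h k = k * A)%Z ->
  sl (Idx d) (fun k => RtoC c * omega d (IZR (h k)))%C = RtoC (c * (IZR d * ind d A)).
Proof.
  intros H. rewrite sl_scal_l, (sl_ext _ _ (fun k => omega d (IZR (k * A)))).
  rewrite fourier by auto. symmetry. apply RtoC_mult. intros; rewrite H; auto.
Qed.
Lemma fourier2 c A B (h : Z -> Z -> Z) : (forall k l, h k l = k * A + l * B)%Z ->
  sl (Idx d) (fun k => sl (Idx d) (fun l => RtoC c * omega d (IZR (h k l))))%C =
  RtoC (c * (IZR d * ind d A) * (IZR d * ind d B)).
Proof.
  intros H. rewrite (sl_ext _ _ (fun k => RtoC (c * (IZR d * ind d B)) * omega d (IZR (k * A)))%C).
  - rewrite (fourier1 _ A). f_equal. ring. auto.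
  - intros k _. rewrite (sl_ext _ _ (fun l => (RtoC c * omega d (IZR (k * A))) * omega d (IZR (l * B)))%C).
    + rewrite sl_scal_l, fourier by auto. rewrite !RtoC_mult. ring.
    + intros l _. rewrite H, plus_IZR, omega_plus by auto. ring.
Qed.

End D3.

Definition Ph (x y x' y' p q p' q' k l k' l' : Z) : Z :=
  (k*(x-p) + l*(y-q) - k'*(x'-p') - l'*(y'-q'))%Z.

Section D4.
Variable d : Z.
Hypothesis hd : (1 <= d)%Z.
Let ND := Idx_NoDup d.

Lemma conj2_Vtop_sl4 al be p q p' q' x y x' y' :
  In p (Idx d) -> In q (Idx d) -> In p' (Idx d) -> In q' (Idx d) ->
  conj2 d (Vtop d al be) (ketbra p q p' q') x y x' y' =
  sl4 d (fun k l k' l' => (RtoC (/ IZR d ^ 4) * omega d (IZR (Ph x y x' y' p q p' q' k l k' l'))) *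
     omega d (IZR (k + l - k' - l') * al + IZR (k*k + l*l - k'*k' - l'*l') * be))%C.
Proof.
  intros Hp Hq Hp' Hq'. rewrite conj2_ketbra by auto. rewrite !Vtop_eq by auto.
  rewrite (sl_mul (Idx d) (Idx d) (fun k => RtoC (/ IZR d) * omega d (IZR k * al + IZR (k * k) * be + IZR (k * (x - p))))%C).
  rewrite (sl_mul (Idx d) (Idx d) (fun k => RtoC (/ IZR d) * omega d (IZR k * al + IZR (k * k) * be + IZR (k * (x' - p'))))%C).
  rewrite sl_conj.
  unfold sl4. rewrite <- sl_scal_r. apply sl_ext; intros k _.
  rewrite <- sl_scal_r. apply sl_ext; intros l _.
  rewrite <- sl_scal_l. apply sl_ext; intros k' _.
  rewrite sl_conj, <- sl_scal_l. apply sl_ext; intros l' _.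
  rewrite !Cmult_conj, !conj_RtoC, !omega_conj by auto.
  set (t1 := IZR k * al + IZR (k * k) * be + IZR (k * (x - p))).
  set (t2 := IZR l * al + IZR (l * l) * be + IZR (l * (y - q))).
  set (t3 := IZR k' * al + IZR (k' * k') * be + IZR (k' * (x' - p'))).
  set (t4 := IZR l' * al + IZR (l' * l') * be + IZR (l' * (y' - q'))).
  transitivity (RtoC (/ IZR d) * RtoC (/ IZR d) * RtoC (/ IZR d) * RtoC (/ IZR d) *
     (omega d t1 * omega d t2 * omega d (- t3) * omega d (- t4)))%C; [ring|].
  rewrite <- !(omega_plus d hd). rewrite <- (Cmult_assoc (RtoC (/ IZR d ^ 4))), <- (omega_plus d hd).
  rewrite <- !RtoC_mult. f_equal. f_equal. pose proof (dnz d hd). field. auto.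
  f_equal. unfold t1, t2, t3, t4, Ph. rewrite !minus_IZR, !plus_IZR, !mult_IZR, !minus_IZR. ring.
Qed.

Lemma Gt_ket p q p' q' x y x' y' :
  In p (Idx d) -> In q (Idx d) -> In p' (Idx d) -> In q' (Idx d) ->
  Gtch d (ketbra p q p' q') x y x' y' =
  RtoC (/ IZR d ^ 4 * (IZR d * ind d (x - x' - p + p') * (IZR d * ind d (y - y' - q + q'))
       + IZR d * ind d (x - y' - p + q') * (IZR d * ind d (y - x' - q + p'))
       - IZR d * ind d (x + y - x' - y' - p - q + p' + q'))).
Proof.
  intros Hp Hq Hp' Hq'. unfold Gtch.
  set (g := fun k l k' l' => (RtoC (/ IZR d ^ 4) * omega d (IZR (Ph x y x' y' p q p' q' k l k' l')))%C).
  assert (G : Good d (fun al be => conj2 d (Vtop d al be) (ketbra p q p' q') x y x' y')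
     (sl4 d (fun k l k' l' => g k l k' l' *
        RtoC (IZR d * IZR d * deltaR (k + l - k' - l') 0 * deltaR (k*k + l*l - k'*k' - l'*l') 0)))%C).
  { apply (Good_ext d _ (fun al be => sl4 d (fun k l k' l' => g k l k' l' *
         omega d (IZR (k + l - k' - l') * al + IZR (k*k + l*l - k'*k' - l'*l') * be))%C)).
    intros al be. apply conj2_Vtop_sl4; auto.
    apply (Good_sl4 d (fun k l k' l' al be => g k l k' l' *
         omega d (IZR (k + l - k' - l') * al + IZR (k*k + l*l - k'*k' - l'*l') * be))%C).
    intros. apply Good_base; auto. }
  rewrite (Expect_Good d _ _ G). rewrite <- sl4_scal.
  rewrite (sl4_ext d _ (fun k l k' l' => RtoC (deltaR k k' * deltaR l l') * g k l k' l'
       + RtoC (deltaR k l' * deltaR l k') * g k l k' l'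
       - RtoC (deltaR k l * deltaR k k' * deltaR l l') * g k l k' l')%C).
  2:{ intros k l k' l' _ _ _ _.
      replace (IZR d * IZR d * deltaR (k + l - k' - l') 0 * deltaR (k * k + l * l - k' * k' - l' * l') 0)
        with (IZR d * IZR d * (deltaR (k + l - k' - l') 0 * deltaR (k * k + l * l - k' * k' - l' * l') 0)) by ring.
      rewrite mask_eq. pose proof (dnz d hd).
      apply injective_projections; simpl; field; auto. }
  rewrite sl4_minus, sl4_plus, pick4a, pick4b, pick4c by auto.
  unfold g. cbv beta.
  rewrite (fourier2 d hd (/ IZR d ^ 4) (x - x' - p + p') (y - y' - q + q')).
  2:{ intros. unfold Ph. ring. }
  rewrite (fourier2 d hd (/ IZR d ^ 4) (x - y' - p + q') (y - x' - q + p')).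
  2:{ intros. unfold Ph. ring. }
  rewrite (fourier1 d hd (/ IZR d ^ 4) (x + y - x' - y' - p - q + p' + q')).
  2:{ intros. unfold Ph. ring. }
  rewrite <- RtoC_plus, <- RtoC_minus. f_equal. ring.
Qed.

End D4.

Definition mG (a b a' b' : Z) : R :=
  deltaR (a + b - a' - b') 0 * deltaR (a*a + b*b - a'*a' - b'*b') 0.

Section D5.
Variable d : Z.
Hypothesis hd : (1 <= d)%Z.
Let ND := Idx_NoDup d.

Lemma Gt_cong X Y a b a' b' : op_eq d X Y -> Gtch d X a b a' b' = Gtch d Y a b a' b'.
Proof.
  intros H. unfold Gtch. f_equal. apply functional_extensionality; intros al.
  apply functional_extensionality; intros be.
  unfold conj2, mul2. rewrite !sumC_sl. apply sl_ext; intros c Hc. rewrite !sumC_sl. apply sl_ext; intros e He.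
  f_equal. rewrite !sumC_sl. apply sl_ext; intros c0 Hc0. rewrite !sumC_sl. apply sl_ext; intros e0 He0.
  rewrite H; auto.
Qed.

Lemma Gt_zero a b a' b' : Gtch d zero2 a b a' b' = RtoC 0.
Proof.
  unfold Gtch.
  assert (G : Good d (fun al be => conj2 d (Vtop d al be) zero2 a b a' b') (RtoC 0)).
  { apply (Good_ext d _ (fun _ _ => RtoC 0)). 2: apply Good_zero.
    intros al be. unfold conj2, mul2, zero2. rewrite sumC_sl. apply sl_zero'. intros c _.
    rewrite sumC_sl. rewrite (sl_zero' _ (fun e => _)). 
    2:{ intros e _. rewrite sumC_sl, sl_zero'. apply Cmult_0_l.
        intros c0 _. rewrite sumC_sl, sl_zero'. reflexivity. intros e0 _. apply Cmult_0_r. }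
    reflexivity. }
  rewrite (Expect_Good d _ _ G). apply Cmult_0_r.
Qed.

Lemma mG_mask a b a' b' : mG a b a' b' =
  deltaR a a' * deltaR b b' + deltaR a b' * deltaR b a' - deltaR a b * deltaR a a' * deltaR b b'.
Proof. apply mask_eq. Qed.

Lemma Gch_ket p q p' q' : In p (Idx d) -> In q (Idx d) -> In p' (Idx d) -> In q' (Idx d) ->
  op_eq d (Gch d (ketbra p q p' q')) (scal2 (mG p q p' q') (ketbra p q p' q')).
Proof.
  intros Hp Hq Hp' Hq' a b a' b' Ha Hb Ha' Hb'. rewrite Gch_E by auto.
  unfold scal2, ketbra. fold (mG a b a' b').
  rewrite !delta_R.
  unfold deltaR.
  destruct (Z.eqb_spec a p), (Z.eqb_spec b q), (Z.eqb_spec a' p'), (Z.eqb_spec b' q'); subst;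
  apply injective_projections; simpl; ring.
Qed.

Lemma Rch_ket p q p' q' a b a' b' :
  In p (Idx d) -> In q (Idx d) -> In p' (Idx d) -> In q' (Idx d) ->
  In a (Idx d) -> In b (Idx d) -> In a' (Idx d) -> In b' (Idx d) ->
  Rch d (ketbra p q p' q') a b a' b' =
  RtoC (mG p q p' q' * mG a b a' b' *
     (/ IZR d ^ 4 * (IZR d * ind d (a - a' - p + p') * (IZR d * ind d (b - b' - q + q'))
       + IZR d * ind d (a - b' - p + q') * (IZR d * ind d (b - a' - q + p'))
       - IZR d * ind d (a + b - a' - b' - p - q + p' + q')))).
Proof.
  intros. unfold Rch. rewrite Gch_E by auto. fold (mG a b a' b').
  assert (Hm : mG p q p' q' = 0 \/ mG p q p' q' = 1).
  { unfold mG, deltaR. destruct (Z.eqb _ _), (Z.eqb _ _); lra. }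
  destruct Hm as [Hm|Hm].
  - rewrite (Gt_cong _ zero2), Gt_zero, Hm.
    apply injective_projections; simpl; ring.
    intros x y x' y' Hx Hy Hx' Hy'. rewrite Gch_ket by auto. unfold scal2, zero2. rewrite Hm.
    apply Cmult_0_l.
  - rewrite (Gt_cong _ (ketbra p q p' q')).
    2:{ intros x y x' y' Hx Hy Hx' Hy'. rewrite Gch_ket by auto. unfold scal2. rewrite Hm.
        apply Cmult_1_l. }
    rewrite Gt_ket by auto. rewrite Hm.
    rewrite <- !RtoC_mult. f_equal. try ring.
Qed.

End D5.

Section D6.
Variable d : Z.
Hypothesis hd : (1 <= d)%Z.
Let ND := Idx_NoDup d.

Lemma wrap_spec z : exists t, wrap d z = (z + d * t)%Z.
Proof. unfold wrap. rewrite Z.mod_eq by lia. exists (- ((z + d/2)/d))%Z. ring. Qed.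

Lemma wrap_in z : In (wrap d z) (Idx d).
Proof. apply Idx_In; auto. unfold wrap. pose proof (Z.mod_pos_bound (z + d/2) d ltac:(lia)). lia. Qed.

Lemma ind_shift A t : ind d (A + d * t) = ind d A.
Proof. unfold ind. rewrite (Z.mul_comm d t), Z.mod_add by lia. reflexivity. Qed.

Lemma ind_eq A B : A = B -> ind d A = ind d B.
Proof. intros ->; reflexivity. Qed.

Lemma ind_0 : ind d 0 = 1.
Proof. unfold ind. rewrite Z.mod_0_l by lia. reflexivity. Qed.

Lemma ind_idx x y : In x (Idx d) -> In y (Idx d) -> ind d (x - y) = deltaR x y.
Proof.
  intros Hx Hy. apply Idx_In in Hx; auto. apply Idx_In in Hy; auto.
  unfold ind, deltaR. destruct (Z.eqb_spec x y).
  - subst. rewrite Z.sub_diag, Z.mod_0_l by lia. reflexivity.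
  - destruct (Z.eqb_spec ((x - y) mod d) 0); auto.
    apply Z.mod_divide in e; [|lia]. destruct e as [k Hk].
    exfalso. assert (k = 0 \/ 1 <= k \/ k <= -1)%Z as [Hk0|[Hk0|Hk0]] by lia; nia.
Qed.

Lemma ind_opp A : ind d (- A) = ind d A.
Proof.
  unfold ind. destruct (Z.eqb_spec (A mod d) 0) as [H|H].
  - rewrite Z_mod_zero_opp_full by auto. reflexivity.
  - destruct (Z.eqb_spec ((-A) mod d) 0) as [H'|H']; auto.
    exfalso. apply H. apply Z_mod_zero_opp_full in H'. rewrite Z.opp_involutive in H'. auto.
Qed.

Lemma zero_in : (2 <= d)%Z -> In 0%Z (Idx d).
Proof. intros. apply Idx_In; auto. assert (0 < d/2)%Z by (apply Z.div_str_pos; lia).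
  pose proof (Z.mul_div_le d 2 ltac:(lia)). lia. Qed.

Lemma ind_w a b i u : In a (Idx d) -> In b (Idx d) ->
  ind d (a - b - i + wrap d (i + u)) = deltaR (wrap d (a + u)) b.
Proof.
  intros Ha Hb. rewrite <- ind_idx by (auto; apply wrap_in).
  destruct (wrap_spec (i + u)) as [t1 E1]. destruct (wrap_spec (a + u)) as [t2 E2].
  rewrite E1, E2.
  replace (a - b - i + (i + u + d * t1))%Z with ((a + u - b) + d * t1)%Z by ring.
  replace (a + u + d * t2 - b)%Z with ((a + u - b) + d * t2)%Z by ring.
  rewrite !ind_shift. reflexivity.
Qed.

Lemma w_ne a u : (2 <= d)%Z -> In a (Idx d) -> In u (Idx d) -> u <> 0%Z -> wrap d (a + u) <> a.
Proof.
  intros h2 Ha Hu Hu0 E.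
  assert (H1 : ind d (wrap d (a + u) - a) = 1) by (rewrite ind_idx, E by (auto; apply wrap_in); unfold deltaR; rewrite Z.eqb_refl; auto).
  destruct (wrap_spec (a + u)) as [t E1]. rewrite E1 in H1.
  replace (a + u + d * t - a)%Z with ((u - 0) + d * t)%Z in H1 by ring.
  rewrite ind_shift, ind_idx in H1 by (auto; apply zero_in; auto).
  unfold deltaR in H1. destruct (Z.eqb_spec u 0); [contradiction|lra].
Qed.

Lemma mG_refl p q : mG p q p q = 1.
Proof. unfold mG, deltaR. replace (p + q - p - q)%Z with 0%Z by ring.
  replace (p * p + q * q - p * p - q * q)%Z with 0%Z by ring. simpl. ring. Qed.
Lemma mG_swap p q : mG p q q p = 1.
Proof. unfold mG, deltaR. replace (p + q - q - p)%Z with 0%Z by ring.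
  replace (p * p + q * q - q * q - p * p)%Z with 0%Z by ring. simpl. ring. Qed.

Lemma mG_cases a b a' b' : (a' = a /\ b' = b) \/ (a' = b /\ b' = a) \/
  (mG a b a' b' = 0 /\ ~ (a' = a /\ b' = b) /\ ~ (a' = b /\ b' = a)).
Proof.
  destruct (Z.eq_dec a' a), (Z.eq_dec b' b); try (left; auto; fail).
  all: destruct (Z.eq_dec a' b), (Z.eq_dec b' a); try (right; left; auto; fail).
  all: right; right; split; [|tauto].
  all: unfold mG, deltaR; destruct (Z.eqb_spec (a + b - a' - b') 0) as [E1|E1], (Z.eqb_spec (a * a + b * b - a' * a' - b' * b') 0) as [E2|E2]; try ring.
  all: destruct (key_sq _ _ _ _ E1 E2); lia.
Qed.

Lemma sum_ket1 (f : Z -> Z) a b a' b' : In a (Idx d) ->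
  sum2 d (fun c => ketbra c (f c) c (f c)) a b a' b' = (delta b (f a) * delta a' a * delta b' (f a))%C.
Proof.
  intros Ha. unfold sum2, ketbra. rewrite sumC_sl.
  apply (pick _ a (fun c => delta b (f c) * delta a' c * delta b' (f c))%C); auto.
  intros c _. rewrite (delta_sym a c). ring.
Qed.
Lemma sum_ket2 (f : Z -> Z) a b a' b' : In a (Idx d) ->
  sum2 d (fun c => ketbra c (f c) (f c) c) a b a' b' = (delta b (f a) * delta a' (f a) * delta b' a)%C.
Proof.
  intros Ha. unfold sum2, ketbra. rewrite sumC_sl.
  apply (pick _ a (fun c => delta b (f c) * delta a' (f c) * delta b' c)%C); auto.
  intros c _. rewrite (delta_sym a c). ring.
Qed.

End D6.

Ltac toR := rewrite ?delta_R; repeat (rewrite <- RtoC_mult || rewrite <- RtoC_plus || rewrite <- RtoC_minus).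

Theorem lemma5 (d : Z) (hd2 : (2 <= d)%Z) (hev : Z.Even d) :
  (forall i j i' j' : Z,
     In i (Idx d) -> In j (Idx d) -> In i' (Idx d) -> In j' (Idx d) ->
     ~ ((i' = i /\ j' = j) \/ (i' = j /\ j' = i)) ->
     op_eq d (Rch d (ketbra i j i' j')) zero2) /\
  (forall i u : Z, In i (Idx d) -> In u (Idx d) -> u <> 0%Z ->
     op_eq d (Rch d (ketbra i (wrap d (i + u)) i (wrap d (i + u))))
       (sub2 (add2 (scal2 (/ IZR d ^ 2)
                       (sum2 d (fun a => ketbra a (wrap d (a + u)) a (wrap d (a + u)))))
                   (scal2 (/ IZR d ^ 2) Iop))
             (corr d)) /\
     op_eq d (Rch d (ketbra i (wrap d (i + u)) (wrap d (i + u)) i))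
       (sub2 (add2 (scal2 (/ IZR d ^ 2)
                       (sum2 d (fun a => ketbra a (wrap d (a + u)) (wrap d (a + u)) a)))
                   (scal2 (/ IZR d ^ 2) Fop))
             (corr d))) /\
  (forall i : Z, In i (Idx d) ->
     op_eq d (Rch d (ketbra i i i i))
       (sub2 (scal2 (/ IZR d ^ 2) (add2 Iop Fop)) (corr d))).
Proof.
  assert (hd : (1 <= d)%Z) by lia.
  pose proof (dnz d hd) as Dn.
  split; [|split].
  - intros i j i' j' Hi Hj Hi' Hj' Hne a b a' b' Ha Hb Ha' Hb'.
    rewrite Rch_ket by auto. unfold zero2.
    destruct (mG_cases i j i' j') as [H|[H|[H _]]]; [tauto|tauto|].
    rewrite H. f_equal. ring.
  - intros i u Hi Hu Hu0.
    assert (Hw : In (wrap d (i + u)) (Idx d)) by (apply wrap_in; auto).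
    assert (Wn : forall x, In x (Idx d) -> wrap d (x + u) <> x) by (intros; apply w_ne; auto).
    split.
    + intros a b a' b' Ha Hb Ha' Hb'. rewrite Rch_ket by auto. rewrite mG_refl.
      unfold corr. unfold sub2, add2, scal2, Iop, Fop, Eop. rewrite sum_ket1 by auto. toR. f_equal.
      rewrite (ind_eq d (a - a' - i + i) (a - a')) by ring. rewrite ind_idx by auto.
      rewrite (ind_eq d (b - b' - wrap d (i + u) + wrap d (i + u)) (b - b')) by ring. rewrite ind_idx by auto.
      rewrite ind_w by auto.
      rewrite (ind_eq d (b - a' - wrap d (i+u) + i) (- (a' - b - i + wrap d (i+u)))) by ring.
      rewrite ind_opp, ind_w by auto.
      pose proof (Wn a Ha). pose proof (Wn b Hb). pose proof (Wn a' Ha'). pose proof (Wn b' Hb').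
      destruct (mG_cases a b a' b') as [[-> ->]|[[-> ->]|[Hm0 [Hn1 Hn2]]]].
      * rewrite mG_refl. rewrite (ind_eq d _ 0) by ring. rewrite ind_0 by auto.
        unfold deltaR; repeat match goal with |- context [Z.eqb ?x ?y] => destruct (Z.eqb_spec x y) end;
        try subst; try (exfalso; lia); field; auto.
      * rewrite mG_swap. rewrite (ind_eq d _ 0) by ring. rewrite ind_0 by auto.
        unfold deltaR; repeat match goal with |- context [Z.eqb ?x ?y] => destruct (Z.eqb_spec x y) end;
        try subst; try (exfalso; lia); field; auto.
      * rewrite Hm0.
        unfold deltaR; repeat match goal with |- context [Z.eqb ?x ?y] => destruct (Z.eqb_spec x y) end;
        try subst; try (exfalso; tauto); try (exfalso; lia); field; auto.
    + intros a b a' b' Ha Hb Ha' Hb'. rewrite Rch_ket by auto. rewrite mG_swap.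
      unfold corr. unfold sub2, add2, scal2, Iop, Fop, Eop.
      rewrite (sum_ket2 d (fun c => wrap d (c + u))) by auto. toR. f_equal.
      rewrite ind_w by auto.
      rewrite (ind_eq d (b - b' - wrap d (i + u) + i) (- (b' - b - i + wrap d (i+u)))) by ring.
      rewrite ind_opp, ind_w by auto.
      rewrite (ind_eq d (a - b' - i + i) (a - b')) by ring. rewrite ind_idx by auto.
      rewrite (ind_eq d (b - a' - wrap d (i + u) + wrap d (i + u)) (b - a')) by ring. rewrite ind_idx by auto.
      pose proof (Wn a Ha). pose proof (Wn b Hb). pose proof (Wn a' Ha'). pose proof (Wn b' Hb').
      destruct (mG_cases a b a' b') as [[-> ->]|[[-> ->]|[Hm0 [Hn1 Hn2]]]].
      * rewrite mG_refl. rewrite (ind_eq d _ 0) by ring. rewrite ind_0 by auto.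
        unfold deltaR; repeat match goal with |- context [Z.eqb ?x ?y] => destruct (Z.eqb_spec x y) end;
        try subst; try (exfalso; lia); field; auto.
      * rewrite mG_swap. rewrite (ind_eq d _ 0) by ring. rewrite ind_0 by auto.
        unfold deltaR; repeat match goal with |- context [Z.eqb ?x ?y] => destruct (Z.eqb_spec x y) end;
        try subst; try (exfalso; lia); field; auto.
      * rewrite Hm0.
        unfold deltaR; repeat match goal with |- context [Z.eqb ?x ?y] => destruct (Z.eqb_spec x y) end;
        try subst; try (exfalso; tauto); try (exfalso; lia); field; auto.
  - intros i Hi a b a' b' Ha Hb Ha' Hb'. rewrite Rch_ket by auto. rewrite mG_refl.
    unfold corr. unfold sub2, add2, scal2, Iop, Fop, Eop. toR. f_equal.
    rewrite (ind_eq d (a - a' - i + i) (a - a')) by ring. rewrite ind_idx by auto.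
    rewrite (ind_eq d (b - b' - i + i) (b - b')) by ring. rewrite ind_idx by auto.
    rewrite (ind_eq d (a - b' - i + i) (a - b')) by ring. rewrite ind_idx by auto.
    rewrite (ind_eq d (b - a' - i + i) (b - a')) by ring. rewrite ind_idx by auto.
    destruct (mG_cases a b a' b') as [[-> ->]|[[-> ->]|[Hm0 [Hn1 Hn2]]]].
    * rewrite mG_refl. rewrite (ind_eq d _ 0) by ring. rewrite ind_0 by auto.
      unfold deltaR; repeat match goal with |- context [Z.eqb ?x ?y] => destruct (Z.eqb_spec x y) end;
      try subst; try (exfalso; lia); field; auto.
    * rewrite mG_swap. rewrite (ind_eq d _ 0) by ring. rewrite ind_0 by auto.
      unfold deltaR; repeat match goal with |- context [Z.eqb ?x ?y] => destruct (Z.eqb_spec x y) end;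
      try subst; try (exfalso; lia); field; auto.
    * rewrite Hm0.
      unfold deltaR; repeat match goal with |- context [Z.eqb ?x ?y] => destruct (Z.eqb_spec x y) end;
      try subst; try (exfalso; tauto); try (exfalso; lia); field; auto.
Qed.
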